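(* Let $v$ be a weight on $[0,1)$ such that $\sup_{t\in[0,1)}\|C_t\|_{H^\infty_v\to H^\infty_v}<\infty$. Then $C_1$ maps $H^\infty_v$ into $H^\infty_v$ and $C_1\colon H^\infty_v\to H^\infty_v$ is continuous.
   Context: $\mathbb{D}=\{z\in\mathbb{C}:|z|<1\}$ and $H(\mathbb{D})$ is the space of holomorphic functions on $\mathbb{D}$. A weight is a continuous non-increasing function $v\colon[0,1)\to(0,\infty)$, extended to $\mathbb{D}$ by $v(z):=v(|z|)$. $H^\infty_v=\{f\in H(\mathbb{D}):\|f\|_{\infty,v}:=\sup_{z\in\mathbb{D}}|f(z)|v(z)<\infty\}$ with norm $\|\cdot\|_{\infty,v}$. For $t\in[0,1]$ the generalized Cesàro operator $C_t$ is defined on $f\in H(\mathbb{D})$ by $C_tf(0)=f(0)$ and $C_tf(z)=\frac{1}{z}\int_0^z\frac{f(\xi)}{1-t\xi}\,d\xi$ for $z\in\mathbb{D}\setminus\{0\}$; for $t\in[0,1)$, $C_t$ is a bounded operator on $H^\infty_v$. *)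

(* Defs.v *)
From Stdlib Require Import Reals ClassicalEpsilon.
From Coquelicot Require Import Coquelicot.

Open Scope R_scope.

Definition in_disc (z : C) : Prop := Cmod z < 1.

(* A weight: continuous non-increasing v : [0,1) -> (0,oo).
   Only the values on [0,1) matter; continuity is continuity of the
   restriction to [0,1). *)
Definition is_weight (v : R -> R) : Prop :=
  (forall r, 0 <= r < 1 -> 0 < v r) /\
  (forall r s, 0 <= r -> r <= s -> s < 1 -> v s <= v r) /\
  (forall r, 0 <= r < 1 -> forall eps, 0 < eps -> exists delta, 0 < delta /\
     forall s, 0 <= s < 1 -> Rabs (s - r) < delta -> Rabs (v s - v r) < eps).

Definition holomorphic_on_disc (f : C -> C) : Prop :=
  forall z, in_disc z -> ex_derive (K := C_AbsRing) (V := C_NormedModule) f z.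

Definition wnorm (v : R -> R) (f : C -> C) : Rbar :=
  Lub_Rbar (fun r => exists z, in_disc z /\ r = Cmod (f z) * v (Cmod z)).

Definition in_Hv (v : R -> R) (f : C -> C) : Prop :=
  holomorphic_on_disc f /\ Rbar_lt (wnorm v f) p_infty.

(* Complex line integral of g along the segment [0, z], parametrized by
   xi = s z, s in [0,1]:  int_0^z g(xi) dxi = int_0^1 g(s z) z ds. *)
Definition seg_integral (g : C -> C) (z : C) : C :=
  RInt (V := C_R_CompleteNormedModule)
       (fun s : R => Cmult (g (RtoC s * z)%C) z) 0 1.

Definition cesaro (t : R) (f : C -> C) : C -> C :=
  fun z => if excluded_middle_informative (z = RtoC 0) then f (RtoC 0)
           else Cmult (Cinv z)
                  (seg_integral (fun xi => Cdiv (f xi) (Cminus (RtoC 1) (Cmult (RtoC t) xi))) z).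

(* Operator norm of T on H^oo_v: sup { ||T f||_v : f in H^oo_v, ||f||_v <= 1 }
   (as an extended real; the set below is the down-closure of these norms,
   so the value is +oo when some ||T f||_v is +oo). *)
Definition opnorm (v : R -> R) (T : (C -> C) -> (C -> C)) : Rbar :=
  Lub_Rbar (fun r => exists f, in_Hv v f /\ Rbar_le (wnorm v f) 1 /\
                              Rbar_le r (wnorm v (T f))).

Definition fsub (f g : C -> C) : C -> C := fun z => Cminus (f z) (g z).

(* Main.v *)
Require Import Defs.
From Stdlib Require Import Reals Lra ClassicalEpsilon.
From Coquelicot Require Import Coquelicot.
Open Scope R_scope.

Lemma normCR (x : C) : norm (K:=R_AbsRing) (V:=C_R_NormedModule) x = Cmod x.
Proof. destruct x as [x1 x2]. unfold Cmod. simpl. change (prod_norm (K:=R_AbsRing) (U:=R_NormedModule) (V:=R_NormedModule) (x1,x2) = sqrt (x1 * (x1 * 1) + x2 * (x2 * 1))). unfold prod_norm. simpl. unfold abs; simpl. f_equal. change (norm x1) with (Rabs x1). change (norm x2) with (Rabs x2). rewrite !Rmult_1_r, <- !Rsqr_def, <- !Rsqr_abs. reflexivity. Qed.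

Lemma cont_RC (phi : R -> C) s :
  (forall eps, 0 < eps -> exists del, 0 < del /\ forall t, Rabs (t - s) < del -> Cmod (phi t - phi s)%C < eps) ->
  @continuous R_UniformSpace (NormedModule.UniformSpace _ C_R_CompleteNormedModule) phi s.
Proof.
  intros H P HP.
  pose proof (@locally_norm_le_locally R_AbsRing C_R_NormedModule (phi s) P HP) as HP2. clear HP. rename HP2 into HP.
  destruct HP as [eps Heps].
  destruct (H eps (cond_pos eps)) as [del [Hd1 Hd2]].
  exists (mkposreal del Hd1). intros t Ht. apply Heps.
  unfold ball_norm. rewrite normCR. exact (Hd2 t Ht).
Qed.

Definition Ccont (g : C -> C) (z : C) : Prop :=
  forall eps, 0 < eps -> exists del, 0 < del /\ forall w, Cmod (w - z)%C < del -> Cmod (g w - g z)%C < eps.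

Definition seg (g : C -> C) (a b : C) (s : R) : C := (g (a + RtoC s * (b - a)) * (b - a))%C.

Definition J (g : C -> C) (a b : C) : C := RInt (V := C_R_CompleteNormedModule) (seg g a b) 0 1.

Lemma Cmod_RtoC_mult (s : R) (x : C) : Cmod (RtoC s * x)%C = Rabs s * Cmod x.
Proof. rewrite Cmod_mult, Cmod_R. reflexivity. Qed.

Lemma seg_cont g a b s : Ccont g (a + RtoC s * (b - a))%C ->
  @continuous R_UniformSpace (NormedModule.UniformSpace _ C_R_CompleteNormedModule) (seg g a b) s.
Proof.
  intros Hg. apply cont_RC. intros eps Heps.
  destruct (Hg (eps / (Cmod (b - a) + 1))) as [d [Hd1 Hd2]].
  { apply Rdiv_lt_0_compat; auto. pose proof (Cmod_ge_0 (b - a)); lra. }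
  exists (d / (Cmod (b - a) + 1)). split.
  { apply Rdiv_lt_0_compat; auto. pose proof (Cmod_ge_0 (b - a)); lra. }
  intros t Ht. unfold seg.
  assert (E : ((g (a + RtoC t * (b - a)) * (b - a) - g (a + RtoC s * (b - a)) * (b - a))
     = (g (a + RtoC t * (b - a)) - g (a + RtoC s * (b - a))) * (b - a))%C) by ring.
  rewrite E, Cmod_mult.
  assert (H1 : Cmod (a + RtoC t * (b - a) - (a + RtoC s * (b - a)))%C < d).
  { replace (a + RtoC t * (b - a) - (a + RtoC s * (b - a)))%C with (RtoC (t - s) * (b - a))%C
      by (rewrite RtoC_minus; ring).
    rewrite Cmod_RtoC_mult.
    pose proof (Cmod_ge_0 (b - a)).
    apply Rle_lt_trans with (Rabs (t - s) * (Cmod (b - a) + 1)). 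
    apply Rmult_le_compat_l. apply Rabs_pos. lra.
    apply (Rmult_lt_compat_r (Cmod (b - a) + 1)) in Ht; [|lra].
    unfold Rdiv in Ht. rewrite Rmult_assoc, Rinv_l in Ht by lra. lra. }
  specialize (Hd2 _ H1).
  pose proof (Cmod_ge_0 (b - a)).
  pose proof (Cmod_ge_0 (g (a + RtoC t * (b - a)) - g (a + RtoC s * (b - a)))%C).
  apply Rle_lt_trans with (Cmod (g (a + RtoC t * (b - a)) - g (a + RtoC s * (b - a)))%C * (Cmod (b - a) + 1)).
  - apply Rmult_le_compat_l; lra.
  - apply (Rmult_lt_compat_r (Cmod (b - a) + 1)) in Hd2; [|lra].
    unfold Rdiv in Hd2. rewrite Rmult_assoc, Rinv_l in Hd2 by lra. lra.
Qed.

Lemma scal_CR (s : R) (y : C) : scal (V:=C_R_ModuleSpace) s y = (RtoC s * y)%C.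
Proof. destruct y; unfold RtoC, Cmult, scal; simpl. unfold prod_scal, scal; simpl. unfold mult; simpl. f_equal; ring. Qed.

Lemma segpt_in (R0 : R) (a b : C) (s : R) : Cmod a <= R0 -> Cmod b <= R0 -> 0 <= s <= 1 ->
  Cmod (a + RtoC s * (b - a))%C <= R0.
Proof.
  intros Ha Hb Hs.
  replace (a + RtoC s * (b - a))%C with (RtoC (1 - s) * a + RtoC s * b)%C by (rewrite RtoC_minus; ring).
  eapply Rle_trans. apply Cmod_triangle. rewrite !Cmod_RtoC_mult.
  rewrite !Rabs_pos_eq by lra.
  apply Rle_trans with ((1 - s) * R0 + s * R0); [|lra].
  apply Rplus_le_compat; apply Rmult_le_compat_l; lra.
Qed.

Lemma seg_ex g a b u v : 0 <= u -> u <= v -> v <= 1 ->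
  (forall s, 0 <= s <= 1 -> Ccont g (a + RtoC s * (b - a))%C) ->
  ex_RInt (V := C_R_CompleteNormedModule) (seg g a b) u v.
Proof.
  intros H1 H2 H3 Hg. apply ex_RInt_continuous. intros z Hz.
  rewrite Rmin_left in Hz by lra. rewrite Rmax_right in Hz by lra.
  apply seg_cont. apply Hg. lra.
Qed.

Lemma aux_h1 (X a b : C) : (RtoC (1/2) * (X * (b - a)) = X * ((a + b) / RtoC 2 - a))%C.
Proof. rewrite RtoC_div by lra. field. Qed.
Lemma aux_h2 (X a b : C) : (RtoC (1/2) * (X * (b - a)) = X * (b - (a + b) / RtoC 2))%C.
Proof. rewrite RtoC_div by lra. field. Qed.
Lemma aux_p1 (a b : C) y : (a + RtoC (1 / 2 * y + 0) * (b - a))%C = (a + RtoC y * ((a + b) / RtoC 2 - a))%C.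
Proof. rewrite RtoC_plus, RtoC_mult, RtoC_div by lra. field. Qed.
Lemma aux_p2 (a b : C) y : (a + RtoC (1 / 2 * y + 1/2) * (b - a))%C = ((a + b) / RtoC 2 + RtoC y * (b - (a + b) / RtoC 2))%C.
Proof. rewrite RtoC_plus, RtoC_mult, RtoC_div by lra. field. Qed.

Lemma J_split g a b :
  (forall s, 0 <= s <= 1 -> Ccont g (a + RtoC s * (b - a))%C) ->
  J g a b = (J g a ((a + b) / RtoC 2) + J g ((a + b) / RtoC 2) b)%C.
Proof.
  intros Hg. unfold J.
  assert (E1 : RInt (V := C_R_CompleteNormedModule) (seg g a b) 0 (1/2) = RInt (V := C_R_CompleteNormedModule) (seg g a ((a + b) / RtoC 2)) 0 1).
  { assert (E := RInt_comp_lin (V := C_R_CompleteNormedModule) (seg g a b) (1/2) 0 0 1).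
    replace (1/2 * 0 + 0) with 0 in E by lra. replace (1/2 * 1 + 0) with (1/2) in E by lra.
    rewrite <- E by (apply seg_ex; auto; lra).
    apply RInt_ext. intros y _. rewrite scal_CR. unfold seg.
    rewrite aux_p1, aux_h1. reflexivity. }
  assert (E2 : RInt (V := C_R_CompleteNormedModule) (seg g a b) (1/2) 1 = RInt (V := C_R_CompleteNormedModule) (seg g ((a + b) / RtoC 2) b) 0 1).
  { assert (E := RInt_comp_lin (V := C_R_CompleteNormedModule) (seg g a b) (1/2) (1/2) 0 1).
    replace (1/2 * 0 + 1/2) with (1/2) in E by lra. replace (1/2 * 1 + 1/2) with 1 in E by lra.
    rewrite <- E by (apply seg_ex; auto; lra).
    apply RInt_ext. intros y _. rewrite scal_CR. unfold seg.
    rewrite aux_p2, aux_h2. reflexivity. }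
  rewrite <- (RInt_Chasles (V := C_R_CompleteNormedModule) (seg g a b) 0 (1/2) 1)
    by (apply seg_ex; auto; lra).
  rewrite E1, E2. reflexivity.
Qed.

Lemma aux_r1 (a b : C) y : (a + RtoC (-1 * y + 1) * (b - a))%C = (b + RtoC y * (a - b))%C.
Proof. rewrite RtoC_plus, RtoC_mult. ring. Qed.
Lemma aux_r2 (X a b : C) : (RtoC (-1) * (X * (b - a)) = X * (a - b))%C.
Proof. ring. Qed.

Lemma J_rev g a b :
  (forall s, 0 <= s <= 1 -> Ccont g (a + RtoC s * (b - a))%C) ->
  J g b a = (- J g a b)%C.
Proof.
  intros Hg. unfold J.
  assert (E := RInt_comp_lin (V := C_R_CompleteNormedModule) (seg g a b) (-1) 1 0 1).
  replace (-1 * 0 + 1) with 1 in E by lra. replace (-1 * 1 + 1) with 0 in E by lra.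
  transitivity (RInt (V := C_R_CompleteNormedModule) (seg g a b) 1 0).
  { rewrite <- E by (apply ex_RInt_swap; apply seg_ex; auto; lra).
    symmetry. apply (RInt_ext (V:=C_R_CompleteNormedModule)). intros y _. rewrite scal_CR. unfold seg.
    rewrite aux_r1, aux_r2. reflexivity. }
  rewrite <- (opp_RInt_swap (V := C_R_CompleteNormedModule)) by (apply seg_ex; auto; lra).
  reflexivity.
Qed.

Lemma J_bound g a b K :
  (forall s, 0 <= s <= 1 -> Ccont g (a + RtoC s * (b - a))%C) ->
  (forall s, 0 <= s <= 1 -> Cmod (g (a + RtoC s * (b - a))%C) <= K) ->
  Cmod (J g a b) <= Cmod (b - a)%C * K.
Proof.
  intros Hg HK. unfold J. rewrite <- normCR.
  eapply Rle_trans.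
  apply (norm_RInt_le_const (V := C_R_CompleteNormedModule) (seg g a b) 0 1 _ (Cmod (b - a)%C * K)).
  lra. 2: apply RInt_correct; apply seg_ex; auto; lra.
  intros s Hs. change (norm (K:=R_AbsRing) (V:=C_R_NormedModule) (seg g a b s) <= Cmod (b - a)%C * K).
  rewrite normCR. unfold seg. rewrite Cmod_mult. rewrite Rmult_comm. apply Rmult_le_compat_l.
  apply Cmod_ge_0. apply HK; auto. lra.
Qed.

Lemma seg_minus g h a b y : seg (fun x => g x - h x)%C a b y = (seg g a b y - seg h a b y)%C.
Proof. unfold seg. ring. Qed.

Lemma J_minus g h a b :
  (forall s, 0 <= s <= 1 -> Ccont g (a + RtoC s * (b - a))%C) ->
  (forall s, 0 <= s <= 1 -> Ccont h (a + RtoC s * (b - a))%C) ->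
  J (fun x => g x - h x)%C a b = (J g a b - J h a b)%C.
Proof.
  intros Hg Hh. unfold J.
  rewrite <- (RInt_minus (V := C_R_CompleteNormedModule)) by (apply seg_ex; auto; lra).
  apply (RInt_ext (V:=C_R_CompleteNormedModule)). intros y _. rewrite seg_minus. reflexivity.
Qed.

Definition Cdiff (f : C -> C) (z l : C) : Prop :=
  forall eps : R, 0 < eps -> exists del : R, 0 < del /\
    forall w, Cmod (w - z)%C < del -> Cmod (f w - f z - l * (w - z))%C <= eps * Cmod (w - z)%C.

Lemma Cmod_minus_sym (a b : C) : Cmod (a - b)%C = Cmod (b - a)%C.
Proof. rewrite <- Cmod_opp. f_equal. ring. Qed.

Lemma Cdiff_Ccont f z l : Cdiff f z l -> Ccont f z.
Proof.
  intros H eps Heps.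
  destruct (H 1 Rlt_0_1) as [d [Hd1 Hd2]].
  pose proof (Cmod_ge_0 l).
  exists (Rmin d (eps / (1 + Cmod l))). split.
  { apply Rmin_pos; auto. apply Rdiv_lt_0_compat; lra. }
  intros w Hw.
  assert (Hw1 : Cmod (w - z)%C < d) by (eapply Rlt_le_trans; [exact Hw| apply Rmin_l]).
  assert (Hw2 : Cmod (w - z)%C < eps / (1 + Cmod l)) by (eapply Rlt_le_trans; [exact Hw| apply Rmin_r]).
  specialize (Hd2 w Hw1).
  replace (f w - f z)%C with ((f w - f z - l * (w - z)) + l * (w - z))%C by ring.
  eapply Rle_lt_trans. apply Cmod_triangle. rewrite Cmod_mult.
  apply Rle_lt_trans with ((1 + Cmod l) * Cmod (w - z)%C).
  { pose proof (Cmod_ge_0 (w - z)%C). nra. }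
  apply (Rmult_lt_compat_l (1 + Cmod l)) in Hw2; [|lra].
  unfold Rdiv in Hw2. rewrite <- Rmult_assoc, (Rmult_comm _ eps), Rmult_assoc, Rinv_r in Hw2 by lra. lra.
Qed.

Lemma Ccont_minus f h z : Ccont f z -> Ccont h z -> Ccont (fun x => f x - h x)%C z.
Proof.
  intros Hf Hh eps Heps.
  destruct (Hf (eps/2)) as [d1 [Hd1 Hf']]; [lra|].
  destruct (Hh (eps/2)) as [d2 [Hd2 Hh']]; [lra|].
  exists (Rmin d1 d2). split. apply Rmin_pos; auto.
  intros w Hw.
  assert (Hw1 : Cmod (w - z)%C < d1) by (eapply Rlt_le_trans; [exact Hw| apply Rmin_l]).
  assert (Hw2 : Cmod (w - z)%C < d2) by (eapply Rlt_le_trans; [exact Hw| apply Rmin_r]).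
  specialize (Hf' w Hw1). specialize (Hh' w Hw2).
  replace (f w - h w - (f z - h z))%C with ((f w - f z) - (h w - h z))%C by ring.
  eapply Rle_lt_trans. unfold Cminus at 1. apply Cmod_triangle. rewrite Cmod_opp. lra.
Qed.

Lemma Ccont_affine (al be : C) z : Ccont (fun x => al + be * x)%C z.
Proof.
  apply (Cdiff_Ccont _ _ be). intros eps Heps. exists 1. split. lra.
  intros w _. replace (al + be * w - (al + be * z) - be * (w - z))%C with (RtoC 0) by ring.
  rewrite Cmod_0. pose proof (Cmod_ge_0 (w - z)%C). nra.
Qed.

Lemma Ccont_const (al : C) z : Ccont (fun _ => al) z.
Proof.
  intros eps Heps. exists 1. split. lra. intros w _. replace (al - al)%C with (RtoC 0) by ring.
  rewrite Cmod_0. lra.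
Qed.

Lemma aux_aff al be a b x : seg (fun x0 : C => (al + be * x0)%C) a b x =
  (RtoC 1 * ((al + be * a) * (b - a)) + RtoC x * (be * (b - a) * (b - a)))%C.
Proof. unfold seg. ring. Qed.

Lemma J_affine al be a b :
  J (fun x => al + be * x)%C a b = (al * (b - a) + be * (b * b - a * a) / RtoC 2)%C.
Proof.
  unfold J.
  set (c1 := ((al + be * a) * (b - a))%C).
  set (c2 := (be * (b - a) * (b - a))%C).
  set (F := fun s : R => (RtoC s * c1 + RtoC (s * s / 2) * c2)%C).
  assert (HF : is_RInt (V := C_R_CompleteNormedModule) (seg (fun x => al + be * x)%C a b) 0 1 (minus (F 1) (F 0))).
  { apply (is_RInt_derive (V := C_R_CompleteNormedModule)).
    - intros x _.
      assert (D : is_derive (K := R_AbsRing) (V := C_R_NormedModule)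
                    (fun s => plus (scal s c1) (scal (s * s / 2) c2)) x (plus (scal (@one R_Ring) c1) (scal x c2))).
      { apply (is_derive_plus (K := R_AbsRing) (V := C_R_NormedModule)).
        + apply (is_derive_scal_l (K:=R_AbsRing) (V:=C_R_NormedModule) (fun s => s) x one c1). apply (is_derive_id (K := R_AbsRing)).
        + apply (is_derive_scal_l (K:=R_AbsRing) (V:=C_R_NormedModule) (fun s => s * s / 2) x x c2).
          assert (D2 : is_derive (fun s : R => s * s / 2) x x) by (auto_derive; [auto | field]).
          exact D2. }
      rewrite (aux_aff al be a b x). fold c1 c2.
      match type of D with is_derive _ _ ?L => replace (RtoC 1 * c1 + RtoC x * c2)%C with L end.
      2:{ rewrite !scal_CR. reflexivity. }
      eapply is_derive_ext; [| exact D]. intros t. unfold F. rewrite !scal_CR. reflexivity.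
    - intros x _. apply seg_cont. apply Ccont_affine. }
  apply is_RInt_unique in HF. rewrite HF.
  transitivity (F 1 - F 0)%C. reflexivity.
  unfold F, c1, c2.
  replace (1 * 1 / 2) with (/2) by field. replace (0 * 0 / 2) with 0 by field.
  rewrite RtoC_inv by lra. field.
Qed.

Definition mid (x y : C) : C := ((x + y) / RtoC 2)%C.
Definition tri g a b c := (J g a b + J g b c + J g c a)%C.

Lemma Cmod_half (x : C) : Cmod (x / RtoC 2)%C = Cmod x / 2.
Proof.
  rewrite Cmod_div. rewrite Cmod_R, Rabs_pos_eq by lra. reflexivity.
  intro H. apply RtoC_inj in H. lra.
Qed.

Lemma mid_in R0 x y : Cmod x <= R0 -> Cmod y <= R0 -> Cmod (mid x y) <= R0.
Proof.
  intros Hx Hy. unfold mid. rewrite Cmod_half. pose proof (Cmod_triangle x y). lra.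
Qed.

Lemma segC (g : C -> C) (R0 : R) (HC : forall x, Cmod x <= R0 -> Ccont g x) a b : Cmod a <= R0 -> Cmod b <= R0 -> forall s, 0 <= s <= 1 -> Ccont g (a + RtoC s * (b - a))%C.
Proof. intros Ha Hb s Hs. apply HC. apply segpt_in; auto. Qed.

Lemma tri_subdiv (g : C -> C) (R0 : R) (HC : forall x, Cmod x <= R0 -> Ccont g x) a b c : Cmod a <= R0 -> Cmod b <= R0 -> Cmod c <= R0 ->
  tri g a b c = (tri g a (mid a b) (mid c a) + tri g (mid a b) b (mid b c)
                + tri g (mid c a) (mid b c) c + tri g (mid a b) (mid b c) (mid c a))%C.
Proof.
  intros Ha Hb Hc.
  assert (Hab := mid_in R0 a b Ha Hb). assert (Hbc := mid_in R0 b c Hb Hc). assert (Hca := mid_in R0 c a Hc Ha).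
  unfold tri.
  rewrite (J_split g a b) by (apply (segC g R0 HC); auto).
  rewrite (J_split g b c) by (apply (segC g R0 HC); auto).
  rewrite (J_split g c a) by (apply (segC g R0 HC); auto).
  fold (mid a b) (mid b c) (mid c a).
  rewrite (J_rev g (mid a b) (mid c a)) by (apply (segC g R0 HC); auto).
  rewrite (J_rev g (mid b c) (mid a b)) by (apply (segC g R0 HC); auto).
  rewrite (J_rev g (mid c a) (mid b c)) by (apply (segC g R0 HC); auto).
  ring.
Qed.

Definition T3 := (C * C * C)%type.
Definition tri3 (g : C -> C) (T : T3) : C := match T with (a, b, c) => tri g a b c end.
Definition v1 (T : T3) : C := match T with (a, b, c) => a end.
Definition sub0 (T : T3) : T3 := match T with (a, b, c) => (a, mid a b, mid c a) end.
Definition sub1 (T : T3) : T3 := match T with (a, b, c) => (mid a b, b, mid b c) end.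
Definition sub2 (T : T3) : T3 := match T with (a, b, c) => (mid c a, mid b c, c) end.
Definition sub3 (T : T3) : T3 := match T with (a, b, c) => (mid a b, mid b c, mid c a) end.

Definition good (R0 : R) (L : R) (T : T3) : Prop := match T with (a, b, c) =>
  Cmod a <= R0 /\ Cmod b <= R0 /\ Cmod c <= R0 /\
  Cmod (b - a)%C <= L /\ Cmod (c - b)%C <= L /\ Cmod (a - c)%C <= L end.

Definition nextT (g : C -> C) (T : T3) : T3 :=
  if Rle_dec (Cmod (tri3 g T)) (4 * Cmod (tri3 g (sub0 T))) then sub0 T
  else if Rle_dec (Cmod (tri3 g T)) (4 * Cmod (tri3 g (sub1 T))) then sub1 T
  else if Rle_dec (Cmod (tri3 g T)) (4 * Cmod (tri3 g (sub2 T))) then sub2 T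
  else sub3 T.

Lemma nextT_tri (g : C -> C) (R0 : R) (HC : forall x, Cmod x <= R0 -> Ccont g x) L T : good R0 L T -> Cmod (tri3 g T) <= 4 * Cmod (tri3 g (nextT g T)).
Proof.
  intros HT. unfold nextT.
  destruct (Rle_dec _ _) as [H0|H0]; auto.
  destruct (Rle_dec _ _) as [H1|H1]; auto.
  destruct (Rle_dec _ _) as [H2|H2]; auto.
  destruct T as [[a b] c]. simpl in *. destruct HT as [Ha [Hb [Hc _]]].
  rewrite (tri_subdiv g R0 HC a b c Ha Hb Hc) at 1.
  set (t0 := tri g a (mid a b) (mid c a)) in *.
  set (t1 := tri g (mid a b) b (mid b c)) in *.
  set (t2 := tri g (mid c a) (mid b c) c) in *.
  set (t3 := tri g (mid a b) (mid b c) (mid c a)) in *.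
  rewrite (tri_subdiv g R0 HC a b c Ha Hb Hc) in H0, H1, H2. fold t0 t1 t2 t3 in H0, H1, H2.
  pose proof (Cmod_triangle (t0 + t1 + t2) t3).
  pose proof (Cmod_triangle (t0 + t1) t2).
  pose proof (Cmod_triangle t0 t1).
  lra.
Qed.

Ltac half_side E :=
  let H := fresh in
  assert (H : E) by (unfold mid; field); rewrite H; clear H;
  try rewrite Cmod_opp; rewrite Cmod_half.

Lemma sub_good (R0 : R) L T : good R0 L T ->
  (good R0 (L / 2) (sub0 T) /\ Cmod (v1 (sub0 T) - v1 T)%C <= L) /\
  (good R0 (L / 2) (sub1 T) /\ Cmod (v1 (sub1 T) - v1 T)%C <= L) /\
  (good R0 (L / 2) (sub2 T) /\ Cmod (v1 (sub2 T) - v1 T)%C <= L) /\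
  (good R0 (L / 2) (sub3 T) /\ Cmod (v1 (sub3 T) - v1 T)%C <= L).
Proof.
  destruct T as [[a b] c]. simpl. intros [Ha [Hb [Hc [Hab [Hbc Hca]]]]].
  assert (Mab := mid_in R0 a b Ha Hb). assert (Mbc := mid_in R0 b c Hb Hc). assert (Mca := mid_in R0 c a Hc Ha).
  assert (L0 : 0 <= L) by (pose proof (Cmod_ge_0 (b - a)%C); lra).
  repeat split; auto.
  - half_side ((mid a b - a) = (b - a) / RtoC 2)%C. lra.
  - half_side ((mid c a - mid a b) = (c - b) / RtoC 2)%C. lra.
  - half_side ((a - mid c a) = (a - c) / RtoC 2)%C. lra.
  - replace (a - a)%C with (RtoC 0) by ring. rewrite Cmod_0. lra.
  - half_side ((b - mid a b) = (b - a) / RtoC 2)%C. lra.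
  - half_side ((mid b c - b) = (c - b) / RtoC 2)%C. lra.
  - half_side ((mid a b - mid b c) = (a - c) / RtoC 2)%C. lra.
  - half_side ((mid a b - a) = (b - a) / RtoC 2)%C. lra.
  - half_side ((mid b c - mid c a) = (b - a) / RtoC 2)%C. lra.
  - half_side ((c - mid b c) = (c - b) / RtoC 2)%C. lra.
  - half_side ((mid c a - c) = (a - c) / RtoC 2)%C. lra.
  - half_side ((mid c a - a) = - ((a - c) / RtoC 2))%C. lra.
  - half_side ((mid b c - mid a b) = - ((a - c) / RtoC 2))%C. lra.
  - half_side ((mid c a - mid b c) = - ((b - a) / RtoC 2))%C. lra.
  - half_side ((mid a b - mid c a) = - ((c - b) / RtoC 2))%C. lra.
  - half_side ((mid a b - a) = (b - a) / RtoC 2)%C. lra.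
Qed.

Lemma nextT_good (g : C -> C) (R0 : R) L T : good R0 L T -> good R0 (L / 2) (nextT g T) /\ Cmod (v1 (nextT g T) - v1 T)%C <= L.
Proof.
  intros HT. destruct (sub_good R0 L T HT) as [S0 [S1 [S2 S3]]].
  unfold nextT.
  destruct (Rle_dec _ _); auto. destruct (Rle_dec _ _); auto. destruct (Rle_dec _ _); auto.
Qed.


Lemma Rabs_le_inv (x y : R) : Rabs x <= y -> - y <= x <= y.
Proof. unfold Rabs. destruct (Rcase_abs x); lra. Qed.

Lemma re_minus (a b : C) : Re (a - b)%C = Re a - Re b.
Proof. unfold Cminus. rewrite re_plus, re_opp. ring. Qed.
Lemma im_minus (a b : C) : Im (a - b)%C = Im a - Im b.
Proof. unfold Cminus. rewrite im_plus, im_opp. ring. Qed.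

Lemma pow2_ge n : INR n + 1 <= 2 ^ n.
Proof.
  induction n. simpl. lra. rewrite S_INR. simpl. pose proof (pos_INR n). lra.
Qed.

Lemma pow2_gt0 n : 0 < 2 ^ n.
Proof. apply pow_lt. lra. Qed.

Lemma small_pow (c eps : R) : 0 <= c -> 0 < eps -> exists n, c / 2 ^ n < eps.
Proof.
  intros Hc He.
  destruct (archimed_cor1 (eps / (c + 1))) as [N [HN1 HN2]].
  { apply Rdiv_lt_0_compat; lra. }
  exists N. pose proof (pow2_ge N). pose proof (pow2_gt0 N).
  assert (HI : 0 < INR N) by (apply lt_0_INR; auto).
  apply Rle_lt_trans with ((c + 1) / INR N).
  { unfold Rdiv. apply Rmult_le_compat; try lra. left. apply Rinv_0_lt_compat; lra.
    apply Rinv_le_contravar; lra. }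
  apply (Rmult_lt_compat_l (c + 1)) in HN1; [|lra].
  unfold Rdiv in *. rewrite <- Rmult_assoc, (Rmult_comm (c + 1) eps), Rmult_assoc, Rinv_r in HN1 by lra. lra.
Qed.

Lemma le_of_pow (a b c : R) : 0 <= c -> (forall n, a <= b + c / 2 ^ n) -> a <= b.
Proof.
  intros Hc H. destruct (Rle_dec a b) as [|Hn]; auto. exfalso.
  destruct (small_pow c (a - b)) as [n Hn']; auto. lra. specialize (H n). lra.
Qed.

Lemma real_limit (r : nat -> R) (K : R) : 0 <= K ->
  (forall n, Rabs (r (S n) - r n) <= K / 2 ^ n) ->
  exists p, forall n, Rabs (r n - p) <= 2 * K / 2 ^ n.
Proof.
  intros HK H.
  set (u := fun n => r n - 2 * K / 2 ^ n).
  set (w := fun n => r n + 2 * K / 2 ^ n).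
  assert (Hu : forall n, u n <= u (S n)).
  { intros n. unfold u. specialize (H n). apply Rabs_le_inv in H. pose proof (pow2_gt0 n).
    simpl. replace (2 * K / (2 * 2 ^ n)) with (K / 2 ^ n) by (field; lra).
    replace (2 * K / 2 ^ n) with (K / 2 ^ n + K / 2 ^ n) by (field; lra). lra. }
  assert (Hw : forall n, w (S n) <= w n).
  { intros n. unfold w. specialize (H n). apply Rabs_le_inv in H. pose proof (pow2_gt0 n).
    simpl. replace (2 * K / (2 * 2 ^ n)) with (K / 2 ^ n) by (field; lra).
    replace (2 * K / 2 ^ n) with (K / 2 ^ n + K / 2 ^ n) by (field; lra). lra. }
  assert (Hu' : forall n k, u n <= u (n + k)%nat).
  { intros n k. induction k. rewrite Nat.add_0_r. lra. rewrite Nat.add_succ_r. specialize (Hu (n + k)%nat). lra. }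
  assert (Hw' : forall n k, w (n + k)%nat <= w n).
  { intros n k. induction k. rewrite Nat.add_0_r. lra. rewrite Nat.add_succ_r. specialize (Hw (n + k)%nat). lra. }
  assert (Huw : forall n, u n <= w n).
  { intros n. unfold u, w. assert (0 <= 2 * K / 2 ^ n) by (pose proof (pow2_gt0 n); apply Rdiv_le_0_compat; lra). lra. }
  assert (Huw' : forall m n, u m <= w n).
  { intros m n. specialize (Hu' m n). specialize (Hw' n m). rewrite Nat.add_comm in Hw'. specialize (Huw (m + n)%nat). lra. }
  destruct (completeness (fun x => exists m, x = u m)) as [p [Hp1 Hp2]].
  { exists (w O). intros x [m ->]. apply Huw'. }
  { exists (u O). exists O. reflexivity. }
  exists p. intros n.
  assert (A1 : u n <= p) by (apply Hp1; exists n; reflexivity).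
  assert (A2 : p <= w n) by (apply Hp2; intros x [m ->]; apply Huw').
  unfold u, w in *. apply Rabs_le. lra.
Qed.

Lemma im_le_Cmod (c : C) : Rabs (Im c) <= Cmod c.
Proof. pose proof (Rmax_Cmod c). pose proof (Rmax_r (Rabs (fst c)) (Rabs (snd c))). unfold Im. lra. Qed.

Lemma Cmod_le_re_im (c : C) : Cmod c <= Rabs (Re c) + Rabs (Im c).
Proof.
  destruct c as [x y]. unfold Cmod, Re, Im. simpl.
  rewrite <- (sqrt_Rsqr (Rabs x + Rabs y)) by (pose proof (Rabs_pos x); pose proof (Rabs_pos y); lra).
  apply sqrt_le_1_alt. unfold Rsqr.
  pose proof (Rabs_pos x); pose proof (Rabs_pos y).
  replace (x * (x * 1) + y * (y * 1)) with (Rabs x * Rabs x + Rabs y * Rabs y).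
  nra. rewrite <- !Rabs_mult. rewrite !Rabs_pos_eq by nra. ring.
Qed.

Lemma complex_limit (x : nat -> C) (K : R) : 0 <= K ->
  (forall n, Cmod (x (S n) - x n)%C <= K / 2 ^ n) ->
  exists p, forall n, Cmod (x n - p)%C <= 4 * K / 2 ^ n.
Proof.
  intros HK H.
  destruct (real_limit (fun n => Re (x n)) K HK) as [p1 Hp1].
  { intros n. eapply Rle_trans; [|apply (H n)]. rewrite <- re_minus. apply re_le_Cmod. }
  destruct (real_limit (fun n => Im (x n)) K HK) as [p2 Hp2].
  { intros n. eapply Rle_trans; [|apply (H n)]. rewrite <- im_minus. apply im_le_Cmod. }
  exists (p1, p2). intros n. eapply Rle_trans. apply Cmod_le_re_im.
  specialize (Hp1 n). specialize (Hp2 n). cbv beta in Hp1, Hp2.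
  replace (4 * K / 2 ^ n) with (2 * K / 2 ^ n + 2 * K / 2 ^ n) by (pose proof (pow2_gt0 n); field; lra).
  rewrite re_minus, im_minus. change (Re (p1, p2)) with p1. change (Im (p1, p2)) with p2. lra.
Qed.

Lemma div_pow_S L n : L / 2 ^ S n = L / 2 ^ n / 2.
Proof. simpl. pose proof (pow2_gt0 n). field. lra. Qed.

Lemma seg_near (u v p : C) X Y s : Cmod (u - p)%C <= X -> Cmod (v - u)%C <= Y -> 0 <= s <= 1 ->
  Cmod (u + RtoC s * (v - u) - p)%C <= X + Y.
Proof.
  intros H1 H2 Hs.
  replace (u + RtoC s * (v - u) - p)%C with ((u - p) + RtoC s * (v - u))%C by ring.
  eapply Rle_trans. apply Cmod_triangle. rewrite Cmod_RtoC_mult, Rabs_pos_eq by lra.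
  pose proof (Cmod_ge_0 (v - u)%C). nra.
Qed.

Lemma tri_affine al be a b c : tri (fun x => al + be * x)%C a b c = RtoC 0.
Proof. unfold tri. rewrite !J_affine. field. Qed.

Lemma edge_est (g : C -> C) (R0 : R) (HC : forall x, Cmod x <= R0 -> Ccont g x)
  (p l : C) (eps del : R) (Hd : forall w, Cmod (w - p)%C < del -> Cmod (g w - g p - l * (w - p))%C <= eps * Cmod (w - p)%C)
  (u v : C) (X Y : R) :
  0 <= eps -> Cmod u <= R0 -> Cmod v <= R0 -> Cmod (u - p)%C <= X -> Cmod (v - u)%C <= Y -> X + Y < del ->
  Cmod (J (fun x => g x - (g p - l * p + l * x))%C u v) <= Y * (eps * (X + Y)).
Proof.
  intros He Hu Hv HX HY HXY.
  eapply Rle_trans. apply J_bound with (K := eps * (X + Y)).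
  - intros s Hs. apply Ccont_minus. apply (segC g R0 HC u v Hu Hv s Hs). apply Ccont_affine.
  - intros s Hs. pose proof (seg_near u v p X Y s HX HY Hs) as Hq.
    set (q := (u + RtoC s * (v - u))%C) in *.
    replace (g q - (g p - l * p + l * q))%C with (g q - g p - l * (q - p))%C by ring.
    eapply Rle_trans. apply Hd. lra. apply Rmult_le_compat_l; auto.
  - pose proof (Cmod_ge_0 (v - u)%C). pose proof (Cmod_ge_0 (u - p)%C). apply Rmult_le_compat_r; auto. apply Rmult_le_pos; lra.
Qed.

Theorem goursat (g : C -> C) (R0 : R) :
  (forall x, Cmod x <= R0 -> exists l, Cdiff g x l) ->
  forall a b c, Cmod a <= R0 -> Cmod b <= R0 -> Cmod c <= R0 -> tri g a b c = RtoC 0.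
Proof.
  intros HD a b c Ha Hb Hc.
  assert (HC : forall x, Cmod x <= R0 -> Ccont g x).
  { intros x Hx. destruct (HD x Hx) as [l Hl]. apply (Cdiff_Ccont _ _ l Hl). }
  set (L := Cmod (b - a)%C + Cmod (c - b)%C + Cmod (a - c)%C).
  assert (HL : 0 <= L) by (unfold L; pose proof (Cmod_ge_0 (b - a)%C); pose proof (Cmod_ge_0 (c - b)%C); pose proof (Cmod_ge_0 (a - c)%C); lra).
  set (T0 := (a, b, c) : T3).
  set (Tn := fun n => Nat.iter n (nextT g) T0).
  assert (Inv : forall n, good R0 (L / 2 ^ n) (Tn n) /\ Cmod (tri3 g T0) <= 4 ^ n * Cmod (tri3 g (Tn n))).
  { induction n.
    - simpl. unfold L. split; [|lra].
      pose proof (Cmod_ge_0 (b - a)%C); pose proof (Cmod_ge_0 (c - b)%C); pose proof (Cmod_ge_0 (a - c)%C).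
      repeat split; auto; lra.
    - destruct IHn as [G1 G2].
      change (Tn (S n)) with (nextT g (Tn n)).
      split.
      + replace (L / 2 ^ S n) with (L / 2 ^ n / 2) by (symmetry; apply div_pow_S).
        apply (nextT_good g R0 (L / 2 ^ n) (Tn n) G1).
      + pose proof (nextT_tri g R0 HC (L / 2 ^ n) (Tn n) G1).
        rewrite <- tech_pow_Rmult. assert (H4 : 0 <= 4 ^ n) by (apply pow_le; lra). apply (Rmult_le_compat_l (4 ^ n)) in H; auto. lra. }
  assert (Step : forall n, Cmod (v1 (Tn (S n)) - v1 (Tn n))%C <= L / 2 ^ n).
  { intros n. destruct (Inv n) as [G1 _]. change (Tn (S n)) with (nextT g (Tn n)).
    apply (nextT_good g R0 (L / 2 ^ n) (Tn n) G1). }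
  destruct (complex_limit (fun n => v1 (Tn n)) L HL Step) as [p Hp].
  assert (Hpin : Cmod p <= R0).
  { apply (le_of_pow _ R0 (4 * L)). lra. intros n.
    destruct (Inv n) as [G1 _]. specialize (Hp n). cbv beta in Hp.
    destruct (Tn n) as [[a' b'] c']. simpl in G1, Hp. destruct G1 as [Ha' _].
    replace p with (a' - (a' - p))%C by ring. eapply Rle_trans. unfold Cminus at 1. apply Cmod_triangle.
    rewrite Cmod_opp. replace (4 * L / 2 ^ n) with (4 * L / 2 ^ n) by reflexivity. lra. }
  destruct (HD p Hpin) as [l Hl].
  assert (Hbound : forall eps, 0 < eps -> Cmod (tri3 g T0) <= 18 * L * L * eps).
  { intros eps Heps.
    destruct (Hl eps Heps) as [del [Hdel Hd]].
    destruct (small_pow (6 * L) del) as [n Hn]; [lra | auto |].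
    destruct (Inv n) as [G1 G2]. specialize (Hp n). cbv beta in Hp.
    set (Ln := L / 2 ^ n) in *.
    assert (HLn : 0 <= Ln) by (unfold Ln; pose proof (pow2_gt0 n); apply Rdiv_le_0_compat; lra).
    assert (E6 : 6 * L / 2 ^ n = 6 * Ln) by (unfold Ln; field; pose proof (pow2_gt0 n); lra).
    assert (E4 : 4 * L / 2 ^ n = 4 * Ln) by (unfold Ln; field; pose proof (pow2_gt0 n); lra).
    rewrite E6 in Hn. rewrite E4 in Hp.
    assert (Hsmall : Cmod (tri3 g (Tn n)) <= 3 * (Ln * (eps * (6 * Ln)))).
    { destruct (Tn n) as [[a' b'] c']. simpl in G1, Hp |- *.
      destruct G1 as [Ha' [Hb' [Hc' [Hab [Hbc Hca]]]]].
      set (A := fun x => (g p - l * p + l * x)%C).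
      assert (HA : forall x, Ccont A x) by (intros; apply Ccont_affine).
      assert (Esplit : tri g a' b' c' = (tri (fun x => g x - A x)%C a' b' c' + tri A a' b' c')%C).
      { unfold tri. rewrite !J_minus; try (apply (segC g R0 HC); auto); try (intros; apply HA). ring. }
      rewrite Esplit. unfold A at 2. rewrite tri_affine, Cplus_0_r.
      unfold tri.
      assert (Hb'p : Cmod (b' - p)%C <= 5 * Ln).
      { replace (b' - p)%C with ((b' - a') + (a' - p))%C by ring. eapply Rle_trans. apply Cmod_triangle. lra. }
      assert (Hc'p : Cmod (c' - p)%C <= 5 * Ln).
      { replace (c' - p)%C with (- (a' - c') + (a' - p))%C by ring. eapply Rle_trans. apply Cmod_triangle. rewrite Cmod_opp. lra. }
      assert (Hdc : Cmod (a' - c')%C <= Ln) by exact Hca.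
      pose proof (edge_est g R0 HC p l eps del Hd a' b' (4 * Ln) Ln ltac:(lra) Ha' Hb' Hp Hab ltac:(lra)) as E1.
      pose proof (edge_est g R0 HC p l eps del Hd b' c' (5 * Ln) Ln ltac:(lra) Hb' Hc' Hb'p Hbc ltac:(lra)) as E2.
      pose proof (edge_est g R0 HC p l eps del Hd c' a' (5 * Ln) Ln ltac:(lra) Hc' Ha' Hc'p Hca ltac:(lra)) as E3.
      fold A in E1, E2, E3.
      eapply Rle_trans. apply Cmod_triangle. eapply Rle_trans. apply Rplus_le_compat_r. apply Cmod_triangle.
      assert (Ln * (eps * (4 * Ln + Ln)) <= Ln * (eps * (6 * Ln))) by (apply Rmult_le_compat_l; auto; apply Rmult_le_compat_l; lra).
      assert (Ln * (eps * (5 * Ln + Ln)) <= Ln * (eps * (6 * Ln))) by (apply Rmult_le_compat_l; auto; apply Rmult_le_compat_l; lra).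
      unfold A in *. lra. }
    eapply Rle_trans. exact G2.
    apply Rle_trans with (4 ^ n * (3 * (Ln * (eps * (6 * Ln))))).
    { apply Rmult_le_compat_l; auto. apply pow_le; lra. }
    right. unfold Ln. replace 4 with (2 * 2) by ring. rewrite Rpow_mult_distr.
    pose proof (pow2_gt0 n). field. lra. }
  assert (H0 : Cmod (tri3 g T0) = 0).
  { apply Rle_antisym; [|apply Cmod_ge_0].
    apply (le_of_pow _ 0 1). lra. intros n.
    destruct (Req_dec L 0) as [HL0|HL0].
    - specialize (Hbound 1 Rlt_0_1). rewrite HL0 in Hbound. pose proof (pow2_gt0 n).
      assert (0 <= 1 / 2 ^ n) by (apply Rdiv_le_0_compat; lra). lra.
    - assert (HLL : 0 < 18 * L * L) by (assert (0 < L) by lra; nra).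
      pose proof (pow2_gt0 n).
      specialize (Hbound (1 / 2 ^ n / (18 * L * L))). 
      assert (Hpos : 0 < 1 / 2 ^ n / (18 * L * L)) by (apply Rdiv_lt_0_compat; [apply Rdiv_lt_0_compat|]; lra).
      specialize (Hbound Hpos). replace (18 * L * L * (1 / 2 ^ n / (18 * L * L))) with (1 / 2 ^ n) in Hbound by (field; lra).
      lra. }
  apply Cmod_eq_0. exact H0.
Qed.

Lemma J_const c a b : J (fun _ => c) a b = (c * (b - a))%C.
Proof.
  transitivity (J (fun x => c + RtoC 0 * x)%C a b).
  { unfold J. apply (RInt_ext (V:=C_R_CompleteNormedModule)). intros x _. unfold seg.
    rewrite Cmult_0_l, Cplus_0_r. reflexivity. }
  rewrite J_affine. field.
Qed.

Lemma Cmod_diff_le (a b : C) : Cmod a <= Cmod b + Cmod (a - b)%C.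
Proof. replace a with (b + (a - b))%C at 1 by ring. apply Cmod_triangle. Qed.

Theorem prim_deriv (g : C -> C) :
  (forall x, Cmod x < 1 -> exists l, Cdiff g x l) ->
  forall z, Cmod z < 1 -> Cdiff (fun w => J g (RtoC 0) w) z (g z).
Proof.
  intros HD z Hz.
  set (R0 := (1 + Cmod z) / 2).
  assert (HD' : forall x, Cmod x <= R0 -> exists l, Cdiff g x l) by (intros x Hx; apply HD; unfold R0 in Hx; lra).
  assert (HC : forall x, Cmod x <= R0 -> Ccont g x).
  { intros x Hx. destruct (HD' x Hx) as [l Hl]. apply (Cdiff_Ccont _ _ l Hl). }
  assert (Hz0 : Cmod z <= R0) by (unfold R0; lra).
  assert (H00 : Cmod (RtoC 0) <= R0) by (rewrite Cmod_0; unfold R0; pose proof (Cmod_ge_0 z); lra).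
  intros eps Heps.
  destruct (HC z Hz0 eps Heps) as [d1 [Hd1 Hd1']].
  exists (Rmin d1 (R0 - Cmod z)). split.
  { apply Rmin_pos; auto. unfold R0; lra. }
  intros w Hw.
  assert (Hw1 : Cmod (w - z)%C < d1) by (eapply Rlt_le_trans; [exact Hw| apply Rmin_l]).
  assert (Hw2 : Cmod (w - z)%C < R0 - Cmod z) by (eapply Rlt_le_trans; [exact Hw| apply Rmin_r]).
  assert (Hwin : Cmod w <= R0) by (pose proof (Cmod_diff_le w z); lra).
  pose proof (goursat g R0 HD' (RtoC 0) z w H00 Hz0 Hwin) as HG. unfold tri in HG.
  rewrite (J_rev g (RtoC 0) w) in HG by (apply (segC g R0 HC); auto).
  assert (E : (J g (RtoC 0) w - J g (RtoC 0) z - g z * (w - z) = J (fun x => g x - g z) z w)%C).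
  { rewrite J_minus; try (apply (segC g R0 HC); auto); try (intros; apply Ccont_const).
    rewrite J_const.
    replace (J g (RtoC 0) w) with (J g (RtoC 0) z + J g z w)%C.
    ring. 
    apply (f_equal (fun u => u + J g (RtoC 0) w)%C) in HG. rewrite Cplus_0_l in HG. rewrite <- HG. ring. }
  rewrite E. rewrite Rmult_comm.
  apply J_bound.
  - intros s Hs. apply Ccont_minus. apply (segC g R0 HC); auto. apply Ccont_const.
  - intros s Hs. left. apply Hd1'. 
    replace (z + RtoC s * (w - z) - z)%C with (RtoC s * (w - z))%C by ring.
    rewrite Cmod_RtoC_mult, Rabs_pos_eq by lra. pose proof (Cmod_ge_0 (w - z)%C). nra.
Qed.

Lemma Cdiff_ext_loc f h z l : (exists r, 0 < r /\ forall w, Cmod (w - z)%C < r -> f w = h w) ->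
  Cdiff f z l -> Cdiff h z l.
Proof.
  intros [r [Hr Hfh]] Hf eps Heps.
  destruct (Hf eps Heps) as [d [Hd Hd']].
  exists (Rmin d r). split. apply Rmin_pos; auto.
  intros w Hw.
  assert (Hw1 : Cmod (w - z)%C < d) by (eapply Rlt_le_trans; [exact Hw| apply Rmin_l]).
  assert (Hw2 : Cmod (w - z)%C < r) by (eapply Rlt_le_trans; [exact Hw| apply Rmin_r]).
  rewrite <- (Hfh w Hw2), <- (Hfh z). apply Hd'; auto.
  replace (z - z)%C with (RtoC 0) by ring. rewrite Cmod_0. lra.
Qed.

Lemma Cdiff_inv z : z <> RtoC 0 -> Cdiff Cinv z (- (/ z * / z))%C.
Proof.
  intros Hz eps Heps.
  assert (Hmz : 0 < Cmod z) by (apply Cmod_gt_0; auto).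
  exists (Rmin (Cmod z / 2) (eps * (Cmod z * Cmod z * Cmod z) / 2)). split.
  { apply Rmin_pos. lra. apply Rdiv_lt_0_compat; [|lra]. apply Rmult_lt_0_compat; auto. apply Rmult_lt_0_compat; [apply Rmult_lt_0_compat|]; auto. }
  intros w Hw.
  assert (Hw1 : Cmod (w - z)%C < Cmod z / 2) by (eapply Rlt_le_trans; [exact Hw| apply Rmin_l]).
  assert (Hw2 : Cmod (w - z)%C < eps * (Cmod z * Cmod z * Cmod z) / 2) by (eapply Rlt_le_trans; [exact Hw| apply Rmin_r]).
  assert (Hmw : Cmod z / 2 <= Cmod w).
  { pose proof (Cmod_diff_le z w). rewrite Cmod_minus_sym in H. lra. }
  assert (Hw0 : w <> RtoC 0).
  { intro E. subst w. rewrite Cmod_0 in Hmw. lra. }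
  replace (/ w - / z - - (/ z * / z) * (w - z))%C with ((w - z) * (w - z) * / w * / z * / z)%C
    by (field; auto).
  rewrite !Cmod_mult, !Cmod_inv by auto.
  pose proof (Cmod_ge_0 (w - z)%C).
  set (m := Cmod (w - z)%C) in *.
  set (a := Cmod z) in *. set (b := Cmod w) in *.
  assert (Hb : 0 < b) by lra.
  apply Rle_trans with (m * m * (2 / a) * / a * / a).
  { repeat (apply Rmult_le_compat_r; [left; apply Rinv_0_lt_compat; lra|]).
    apply Rmult_le_compat_l. nra.
    replace (2 / a) with (/ (a / 2)) by (field; lra). apply Rinv_le_contravar; lra. }
  replace (m * m * (2 / a) * / a * / a) with (m * (m * 2 / (a * a * a))) by (field; lra).
  rewrite (Rmult_comm eps). apply Rmult_le_compat_l; auto.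
  apply Rmult_le_reg_r with (a * a * a). nra.
  replace (m * 2 / (a * a * a) * (a * a * a)) with (m * 2) by (field; lra). lra.
Qed.

Lemma Cdiff_comp_affine phi a b z l : Cdiff phi (a + b * z)%C l -> Cdiff (fun x => phi (a + b * x)%C) z (b * l)%C.
Proof.
  intros H eps Heps.
  pose proof (Cmod_ge_0 b).
  destruct (H (eps / (Cmod b + 1))) as [d [Hd Hd']].
  { apply Rdiv_lt_0_compat; lra. }
  exists (d / (Cmod b + 1)). split. apply Rdiv_lt_0_compat; lra.
  intros w Hw.
  assert (Hw' : Cmod (a + b * w - (a + b * z))%C < d).
  { replace (a + b * w - (a + b * z))%C with (b * (w - z))%C by ring. rewrite Cmod_mult.
    pose proof (Cmod_ge_0 (w - z)%C).
    apply Rle_lt_trans with ((Cmod b + 1) * Cmod (w - z)%C). nra.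
    apply (Rmult_lt_compat_l (Cmod b + 1)) in Hw; [|lra].
    replace ((Cmod b + 1) * (d / (Cmod b + 1))) with d in Hw by (field; lra). lra. }
  specialize (Hd' _ Hw').
  replace (phi (a + b * w) - phi (a + b * z) - b * l * (w - z))%C
    with (phi (a + b * w) - phi (a + b * z) - l * (a + b * w - (a + b * z)))%C by ring.
  eapply Rle_trans. exact Hd'.
  replace (a + b * w - (a + b * z))%C with (b * (w - z))%C by ring. rewrite Cmod_mult.
  pose proof (Cmod_ge_0 (w - z)%C).
  replace (eps / (Cmod b + 1) * (Cmod b * Cmod (w - z)%C)) with (eps * Cmod (w - z)%C * (Cmod b / (Cmod b + 1))) by (field; lra).
  assert (Cmod b / (Cmod b + 1) <= 1).
  { apply Rmult_le_reg_r with (Cmod b + 1). lra. replace (Cmod b / (Cmod b + 1) * (Cmod b + 1)) with (Cmod b) by (field; lra). lra. }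
  assert (0 <= Cmod b / (Cmod b + 1)) by (apply Rdiv_le_0_compat; lra).
  assert (0 <= eps * Cmod (w - z)%C) by nra. nra.
Qed.

Lemma Cdiff_is_derive f z l : Cdiff f z l -> is_derive (K := C_AbsRing) (V := C_NormedModule) f z l.
Proof.
  intros H. split.
  - apply is_linear_scal_l.
  - intros x Hx. apply (@is_filter_lim_locally_unique C_AbsRing (AbsRing_NormedModule C_AbsRing)) in Hx. subst x.
    intros eps. destruct (H eps (cond_pos eps)) as [d [Hd1 Hd2]].
    exists (mkposreal d Hd1). intros w Hw. simpl in Hw.
    specialize (Hd2 w Hw). 
    rewrite (Cmult_comm l) in Hd2. exact Hd2.
Qed.

Lemma is_derive_Cdiff f z l : is_derive (K := C_AbsRing) (V := C_NormedModule) f z l -> Cdiff f z l.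
Proof.
  intros [_ H] eps Heps.
  destruct (H z (fun P HP => HP) (mkposreal eps Heps)) as [d Hd].
  exists d. split. apply cond_pos. intros w Hw.
  specialize (Hd w Hw). rewrite (Cmult_comm l). exact Hd.
Qed.

Lemma Cdiff_is_derive' f z l : Cdiff f z l -> is_derive (K := C_AbsRing) (V := AbsRing_NormedModule C_AbsRing) f z l.
Proof.
  intros H. split.
  - apply is_linear_scal_l.
  - intros x Hx. apply (@is_filter_lim_locally_unique C_AbsRing (AbsRing_NormedModule C_AbsRing)) in Hx. subst x.
    intros eps. destruct (H eps (cond_pos eps)) as [d [Hd1 Hd2]].
    exists (mkposreal d Hd1). intros w Hw. simpl in Hw.
    specialize (Hd2 w Hw). 
    rewrite (Cmult_comm l) in Hd2. exact Hd2.
Qed.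

Lemma is_derive_Cdiff' f z l : is_derive (K := C_AbsRing) (V := AbsRing_NormedModule C_AbsRing) f z l -> Cdiff f z l.
Proof.
  intros [_ H] eps Heps.
  destruct (H z (fun P HP => HP) (mkposreal eps Heps)) as [d Hd].
  exists d. split. apply cond_pos. intros w Hw.
  specialize (Hd w Hw). rewrite (Cmult_comm l). exact Hd.
Qed.

Lemma Cdiff_mult f h z lf lh : Cdiff f z lf -> Cdiff h z lh ->
  Cdiff (fun x => f x * h x)%C z (lf * h z + f z * lh)%C.
Proof.
  intros Hf Hh. apply is_derive_Cdiff'.
  apply Cdiff_is_derive' in Hf. apply Cdiff_is_derive' in Hh.
  apply (is_derive_mult (K := C_AbsRing) f h z lf lh Hf Hh). intros; apply Cmult_comm.
Qed.

Lemma holo_Cdiff f : holomorphic_on_disc f <-> forall z, Cmod z < 1 -> exists l, Cdiff f z l.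
Proof.
  split.
  - intros H z Hz. destruct (H z Hz) as [l Hl]. exists l. apply is_derive_Cdiff. exact Hl.
  - intros H z Hz. destruct (H z Hz) as [l Hl]. exists l. apply Cdiff_is_derive. exact Hl.
Qed.

Definition h1 (f : C -> C) : C -> C := fun xi => Cdiv (f xi) (Cminus (RtoC 1) (Cmult (RtoC 1) xi)).

Lemma one_minus_nz (z : C) : Cmod z < 1 -> (RtoC 1 + - RtoC 1 * z)%C <> RtoC 0.
Proof.
  intros Hz E. assert (z = RtoC 1).
  { apply (f_equal (fun u => u + z)%C) in E. rewrite Cplus_0_l in E. rewrite <- E. ring. }
  subst z. rewrite Cmod_1 in Hz. lra.
Qed.

Lemma h1_diff f : (forall z, Cmod z < 1 -> exists l, Cdiff f z l) ->
  forall z, Cmod z < 1 -> exists l, Cdiff (h1 f) z l.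
Proof.
  intros Hf z Hz. destruct (Hf z Hz) as [lf Hlf].
  pose proof (Cdiff_inv _ (one_minus_nz z Hz)) as Hi.
  pose proof (Cdiff_comp_affine Cinv (RtoC 1) (- RtoC 1)%C z _ Hi) as Hu.
  pose proof (Cdiff_mult _ _ z _ _ Hlf Hu) as Hm.
  eexists. eapply Cdiff_ext_loc; [|exact Hm].
  exists 1. split. lra. intros w _. unfold h1, Cdiv. f_equal. f_equal. ring.
Qed.

Lemma seg_integral_J h w : seg_integral h w = J h (RtoC 0) w.
Proof.
  unfold seg_integral, J. apply (RInt_ext (V:=C_R_CompleteNormedModule)). intros x _. unfold seg.
  replace (RtoC 0 + RtoC x * (w - RtoC 0))%C with (RtoC x * w)%C by ring.
  replace (w - RtoC 0)%C with w by ring. reflexivity.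
Qed.

Lemma h1_0 f : h1 f (RtoC 0) = f (RtoC 0).
Proof. unfold h1. unfold Cdiv. replace (RtoC 1 - RtoC 1 * RtoC 0)%C with (RtoC 1) by ring.
  replace (/ RtoC 1)%C with (RtoC 1). ring. rewrite <- RtoC_inv by lra. f_equal. field. Qed.

Lemma cesaro_nz f w : w <> RtoC 0 -> cesaro 1 f w = (/ w * J (h1 f) (RtoC 0) w)%C.
Proof.
  intros Hw. unfold cesaro. destruct (excluded_middle_informative (w = RtoC 0)) as [E|_].
  contradiction. rewrite seg_integral_J. reflexivity.
Qed.

Lemma cesaro_0 f : cesaro 1 f (RtoC 0) = f (RtoC 0).
Proof.
  unfold cesaro. destruct (excluded_middle_informative (RtoC 0 = RtoC 0)) as [_|E]. reflexivity. contradiction.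
Qed.

Theorem cesaro1_holo f : holomorphic_on_disc f -> holomorphic_on_disc (cesaro 1 f).
Proof.
  intros Hf0. apply holo_Cdiff. pose proof (proj1 (holo_Cdiff f) Hf0) as Hf.
  pose proof (h1_diff f Hf) as Hh.
  assert (HhC : forall x, Cmod x < 1 -> Ccont (h1 f) x).
  { intros x Hx. destruct (Hh x Hx) as [l Hl]. apply (Cdiff_Ccont _ _ l Hl). }
  intros z Hz.
  destruct (Ceq_dec z (RtoC 0)) as [Ez|Nz].
  - subst z. destruct (Hh (RtoC 0) Hz) as [l0 Hl0].
    exists (l0 / RtoC 2)%C. intros eps Heps.
    destruct (Hl0 eps Heps) as [d [Hd Hd']].
    exists (Rmin d 1). split. apply Rmin_pos; lra.
    intros w Hw.
    assert (Hw1 : Cmod (w - RtoC 0)%C < d) by (eapply Rlt_le_trans; [exact Hw| apply Rmin_l]).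
    assert (Hw2 : Cmod (w - RtoC 0)%C < 1) by (eapply Rlt_le_trans; [exact Hw| apply Rmin_r]).
    replace (w - RtoC 0)%C with w in * by ring.
    rewrite cesaro_0.
    destruct (Ceq_dec w (RtoC 0)) as [Ew|Nw].
    { subst w. rewrite cesaro_0. replace (f (RtoC 0) - f (RtoC 0) - l0 / RtoC 2 * RtoC 0)%C with (RtoC 0) by ring.
      rewrite Cmod_0. lra. }
    rewrite (cesaro_nz f w Nw).
    assert (Hseg : forall s, 0 <= s <= 1 -> Cmod (RtoC 0 + RtoC s * (w - RtoC 0))%C <= Cmod w).
    { intros s Hs. replace (RtoC 0 + RtoC s * (w - RtoC 0))%C with (RtoC s * w)%C by ring.
      rewrite Cmod_RtoC_mult, Rabs_pos_eq by lra. pose proof (Cmod_ge_0 w). nra. }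
    set (A := fun x => (h1 f (RtoC 0) + l0 * x)%C).
    assert (EJ : J (h1 f) (RtoC 0) w = (J (fun x => h1 f x - A x) (RtoC 0) w + J A (RtoC 0) w)%C).
    { rewrite J_minus. ring.
      intros s Hs. apply HhC. specialize (Hseg s Hs). lra.
      intros s Hs. apply Ccont_affine. }
    unfold A at 2 in EJ. rewrite J_affine in EJ. rewrite h1_0 in EJ.
    assert (Hw0 : 0 < Cmod w) by (apply Cmod_gt_0; auto).
    replace (/ w * J (h1 f) (RtoC 0) w - f (RtoC 0) - l0 / RtoC 2 * w)%C
      with (/ w * J (fun x : C => (h1 f x - A x)%C) (RtoC 0) w)%C.
    2:{ rewrite EJ. field. auto. }
    rewrite Cmod_mult, Cmod_inv by auto.
    assert (HB : Cmod (J (fun x : C => (h1 f x - A x)%C) (RtoC 0) w) <= Cmod (w - RtoC 0)%C * (eps * Cmod w)).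
    { apply J_bound.
      - intros s Hs. apply Ccont_minus. apply HhC. specialize (Hseg s Hs). lra. apply Ccont_affine.
      - intros s Hs. specialize (Hseg s Hs). unfold A.
        set (q := (RtoC 0 + RtoC s * (w - RtoC 0))%C) in *.
        replace (h1 f q - (h1 f (RtoC 0) + l0 * q))%C with (h1 f q - h1 f (RtoC 0) - l0 * (q - RtoC 0))%C by ring.
        eapply Rle_trans. apply Hd'. replace (q - RtoC 0)%C with q by ring. lra.
        replace (q - RtoC 0)%C with q by ring. apply Rmult_le_compat_l; lra. }
    replace (w - RtoC 0)%C with w in HB by ring.
    apply Rmult_le_reg_l with (Cmod w); auto.
    rewrite <- Rmult_assoc, Rinv_r, Rmult_1_l by lra. nra.
  - assert (Hz0 : 0 < Cmod z) by (apply Cmod_gt_0; auto).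
    pose proof (prim_deriv (h1 f) Hh z Hz) as HP.
    pose proof (Cdiff_mult _ _ z _ _ (Cdiff_inv z Nz) HP) as HM.
    eexists. eapply Cdiff_ext_loc; [|exact HM].
    exists (Cmod z). split; auto. intros w Hw.
    assert (Nw : w <> RtoC 0).
    { intro E. subst w. replace (RtoC 0 - z)%C with (- z)%C in Hw by ring. rewrite Cmod_opp in Hw. lra. }
    rewrite (cesaro_nz f w Nw). reflexivity.
Qed.

Lemma wnorm_ge v F z : in_disc z -> Rbar_le (Cmod (F z) * v (Cmod z)) (wnorm v F).
Proof.
  intros Hz. unfold wnorm. destruct (Lub_Rbar_correct (fun r => exists z, in_disc z /\ r = Cmod (F z) * v (Cmod z))) as [H1 _].
  apply H1. exists z. auto.
Qed.

Lemma wnorm_le v F (B : R) : (forall z, in_disc z -> Cmod (F z) * v (Cmod z) <= B) -> Rbar_le (wnorm v F) B.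
Proof.
  intros H. unfold wnorm. destruct (Lub_Rbar_correct (fun r => exists z, in_disc z /\ r = Cmod (F z) * v (Cmod z))) as [_ H2].
  apply H2. intros x [z [Hz ->]]. simpl. apply H; auto.
Qed.

Lemma disc0 : in_disc (RtoC 0).
Proof. unfold in_disc. rewrite Cmod_0. lra. Qed.

Lemma wnorm_finite v F : Rbar_lt (wnorm v F) p_infty ->
  exists N : R, wnorm v F = Finite N /\ forall z, in_disc z -> Cmod (F z) * v (Cmod z) <= N.
Proof.
  intros H. pose proof (wnorm_ge v F (RtoC 0) disc0) as H0.
  destruct (wnorm v F) as [N| |] eqn:E; simpl in H, H0; try contradiction.
  exists N. split; auto. intros z Hz. pose proof (wnorm_ge v F z Hz) as Hz'. rewrite E in Hz'. exact Hz'.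
Qed.

Lemma opnorm_ge v T f z : in_Hv v f -> Rbar_le (wnorm v f) 1 -> in_disc z ->
  Rbar_le (Cmod (T f z) * v (Cmod z)) (opnorm v T).
Proof.
  intros Hf Hf1 Hz. unfold opnorm.
  destruct (Lub_Rbar_correct (fun r => exists f, in_Hv v f /\ Rbar_le (wnorm v f) 1 /\ Rbar_le r (wnorm v (T f)))) as [H1 _].
  apply H1. exists f. split; [exact Hf | split; [exact Hf1 | apply wnorm_ge; auto]].
Qed.

Definition ht (t : R) (f : C -> C) : C -> C := fun xi => Cdiv (f xi) (Cminus (RtoC 1) (Cmult (RtoC t) xi)).

Lemma one_minus_t_nz (t : R) (z : C) : 0 <= t <= 1 -> Cmod z < 1 -> (RtoC 1 + - RtoC t * z)%C <> RtoC 0.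
Proof.
  intros Ht Hz E. assert (E2 : (RtoC t * z)%C = RtoC 1).
  { apply (f_equal (fun u => u + RtoC t * z)%C) in E. rewrite Cplus_0_l in E. rewrite <- E. ring. }
  apply (f_equal Cmod) in E2. rewrite Cmod_mult, Cmod_R, Cmod_1, Rabs_pos_eq in E2 by lra.
  pose proof (Cmod_ge_0 z). nra.
Qed.

Lemma ht_diff t f : 0 <= t <= 1 -> (forall z, Cmod z < 1 -> exists l, Cdiff f z l) ->
  forall z, Cmod z < 1 -> exists l, Cdiff (ht t f) z l.
Proof.
  intros Ht Hf z Hz. destruct (Hf z Hz) as [lf Hlf].
  pose proof (Cdiff_inv _ (one_minus_t_nz t z Ht Hz)) as Hi.
  pose proof (Cdiff_comp_affine Cinv (RtoC 1) (- RtoC t)%C z _ Hi) as Hu.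
  pose proof (Cdiff_mult _ _ z _ _ Hlf Hu) as Hm.
  eexists. eapply Cdiff_ext_loc; [|exact Hm].
  exists 1. split. lra. intros w _. unfold ht, Cdiv. f_equal. f_equal. ring.
Qed.

Lemma cesaro_nz_t t f w : w <> RtoC 0 -> cesaro t f w = (/ w * J (ht t f) (RtoC 0) w)%C.
Proof.
  intros Hw. unfold cesaro. destruct (excluded_middle_informative (w = RtoC 0)) as [E|_].
  contradiction. rewrite seg_integral_J. reflexivity.
Qed.

Lemma cesaro_0_t t f : cesaro t f (RtoC 0) = f (RtoC 0).
Proof.
  unfold cesaro. destruct (excluded_middle_informative (RtoC 0 = RtoC 0)) as [_|E]. reflexivity. contradiction.
Qed.

Lemma J_ext g1 g2 a b : (forall x, g1 x = g2 x) -> J g1 a b = J g2 a b.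
Proof.
  intros H. unfold J. apply (RInt_ext (V:=C_R_CompleteNormedModule)). intros x _. unfold seg. rewrite H. reflexivity.
Qed.

Lemma J_scal g (c : R) a b : (forall s, 0 <= s <= 1 -> Ccont g (a + RtoC s * (b - a))%C) ->
  J (fun x => RtoC c * g x)%C a b = (RtoC c * J g a b)%C.
Proof.
  intros Hg. unfold J.
  rewrite <- scal_CR.
  rewrite <- (RInt_scal (V := C_R_CompleteNormedModule)) by (apply seg_ex; auto; lra).
  apply (RInt_ext (V:=C_R_CompleteNormedModule)). intros x _. rewrite scal_CR. unfold seg.
  rewrite Cmult_assoc. reflexivity.
Qed.

Lemma Cdiff_const k z : Cdiff (fun _ => k) z (RtoC 0).
Proof.
  intros eps Heps. exists 1. split. lra. intros w _.
  replace (k - k - RtoC 0 * (w - z))%C with (RtoC 0) by ring. rewrite Cmod_0.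
  pose proof (Cmod_ge_0 (w - z)%C). nra.
Qed.

Lemma Cdiff_minus f g z lf lg : Cdiff f z lf -> Cdiff g z lg -> Cdiff (fun x => f x - g x)%C z (lf - lg)%C.
Proof.
  intros Hf Hg eps Heps.
  destruct (Hf (eps/2)) as [d1 [Hd1 Hf']]; [lra|].
  destruct (Hg (eps/2)) as [d2 [Hd2 Hg']]; [lra|].
  exists (Rmin d1 d2). split. apply Rmin_pos; auto.
  intros w Hw.
  assert (Hw1 : Cmod (w - z)%C < d1) by (eapply Rlt_le_trans; [exact Hw| apply Rmin_l]).
  assert (Hw2 : Cmod (w - z)%C < d2) by (eapply Rlt_le_trans; [exact Hw| apply Rmin_r]).
  specialize (Hf' w Hw1). specialize (Hg' w Hw2).
  replace (f w - g w - (f z - g z) - (lf - lg) * (w - z))%C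
    with ((f w - f z - lf * (w - z)) - (g w - g z - lg * (w - z)))%C by ring.
  eapply Rle_trans. unfold Cminus at 1. apply Cmod_triangle. rewrite Cmod_opp. lra.
Qed.

Lemma holo_scal (c : R) f : holomorphic_on_disc f -> holomorphic_on_disc (fun x => RtoC c * f x)%C.
Proof.
  intros Hf. apply holo_Cdiff. pose proof (proj1 (holo_Cdiff f) Hf) as Hf'.
  intros z Hz. destruct (Hf' z Hz) as [l Hl].
  eexists. apply (Cdiff_mult (fun _ => RtoC c) f z _ _ (Cdiff_const _ z) Hl).
Qed.

Lemma holo_minus f g : holomorphic_on_disc f -> holomorphic_on_disc g -> holomorphic_on_disc (fsub f g).
Proof.
  intros Hf Hg. apply holo_Cdiff. pose proof (proj1 (holo_Cdiff f) Hf) as Hf'. pose proof (proj1 (holo_Cdiff g) Hg) as Hg'.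
  intros z Hz. destruct (Hf' z Hz) as [l1 Hl1]. destruct (Hg' z Hz) as [l2 Hl2].
  eexists. apply (Cdiff_minus f g z _ _ Hl1 Hl2).
Qed.

Lemma ht_cont t f : 0 <= t <= 1 -> holomorphic_on_disc f -> forall x, Cmod x < 1 -> Ccont (ht t f) x.
Proof.
  intros Ht Hf x Hx. destruct (ht_diff t f Ht (proj1 (holo_Cdiff f) Hf) x Hx) as [l Hl].
  apply (Cdiff_Ccont _ _ l Hl).
Qed.

Lemma seg0_in (z : C) s : 0 <= s <= 1 -> Cmod (RtoC 0 + RtoC s * (z - RtoC 0))%C <= Cmod z.
Proof.
  intros Hs. replace (RtoC 0 + RtoC s * (z - RtoC 0))%C with (RtoC s * z)%C by ring.
  rewrite Cmod_RtoC_mult, Rabs_pos_eq by lra. pose proof (Cmod_ge_0 z). nra.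
Qed.

Lemma cesaro_scal t (c : R) f z : 0 <= t <= 1 -> holomorphic_on_disc f -> in_disc z ->
  cesaro t (fun x => RtoC c * f x)%C z = (RtoC c * cesaro t f z)%C.
Proof.
  intros Ht Hf Hz.
  destruct (Ceq_dec z (RtoC 0)) as [E|N].
  - subst z. rewrite !cesaro_0_t. reflexivity.
  - rewrite !cesaro_nz_t by auto.
    rewrite (J_ext _ (fun x => RtoC c * ht t f x)%C).
    2:{ intros x. unfold ht, Cdiv. ring. }
    rewrite J_scal. ring.
    intros s Hs. apply ht_cont; auto. unfold in_disc in Hz. pose proof (seg0_in z s Hs). lra.
Qed.

Lemma cesaro_minus f g z : holomorphic_on_disc f -> holomorphic_on_disc g -> in_disc z ->
  cesaro 1 (fsub g f) z = (cesaro 1 g z - cesaro 1 f z)%C.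
Proof.
  intros Hf Hg Hz.
  destruct (Ceq_dec z (RtoC 0)) as [E|N].
  - subst z. rewrite !cesaro_0_t. reflexivity.
  - rewrite !cesaro_nz_t by auto.
    rewrite (J_ext _ (fun x => ht 1 g x - ht 1 f x)%C).
    2:{ intros x. unfold ht, fsub, Cdiv. ring. }
    rewrite J_minus. ring.
    intros s Hs. apply ht_cont; auto. lra. unfold in_disc in Hz. pose proof (seg0_in z s Hs). lra.
    intros s Hs. apply ht_cont; auto. lra. unfold in_disc in Hz. pose proof (seg0_in z s Hs). lra.
Qed.

Lemma weight_pos v r : is_weight v -> 0 <= r < 1 -> 0 < v r.
Proof. intros [H _] Hr. apply H; auto. Qed.

Lemma weight_mono v r s : is_weight v -> 0 <= r -> r <= s -> s < 1 -> v s <= v r.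
Proof. intros [_ [H _]] H1 H2 H3. apply H; auto. Qed.

Lemma Cmod_one_minus (t : R) (q : C) : 0 <= t <= 1 -> 1 - Cmod q <= Cmod (RtoC 1 - RtoC t * q)%C.
Proof.
  intros Ht. pose proof (Cmod_diff_le (RtoC 1) (RtoC t * q)%C) as H.
  rewrite Cmod_1, Cmod_mult, Cmod_R, Rabs_pos_eq in H by lra.
  pose proof (Cmod_ge_0 q). nra.
Qed.

Lemma cesaro_diff_est v f (N t : R) z : is_weight v -> holomorphic_on_disc f -> 0 <= t <= 1 ->
  (forall q, in_disc q -> Cmod (f q) * v (Cmod q) <= N) -> in_disc z ->
  Cmod (cesaro t f z - cesaro 1 f z)%C <= N * (1 - t) / (v (Cmod z) * ((1 - Cmod z) * (1 - Cmod z))).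
Proof.
  intros Hv Hf Ht HN Hz. unfold in_disc in Hz.
  set (r := Cmod z) in *.
  assert (Hr0 : 0 <= r) by apply Cmod_ge_0.
  assert (Hvr : 0 < v r) by (apply weight_pos; auto).
  assert (HN0 : 0 <= N).
  { specialize (HN (RtoC 0) disc0). rewrite Cmod_0 in HN. pose proof (weight_pos v 0 Hv ltac:(lra)).
    pose proof (Cmod_ge_0 (f (RtoC 0))). nra. }
  assert (HK0 : 0 <= N * (1 - t) / (v r * ((1 - r) * (1 - r)))).
  { apply Rdiv_le_0_compat. nra. apply Rmult_lt_0_compat; auto. nra. }
  destruct (Ceq_dec z (RtoC 0)) as [E|Nz].
  { rewrite E. rewrite !cesaro_0_t. replace (f (RtoC 0) - f (RtoC 0))%C with (RtoC 0) by ring. rewrite Cmod_0. auto. }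
  assert (Hrp : 0 < r) by (apply Cmod_gt_0; auto).
  rewrite !cesaro_nz_t by auto.
  assert (HC : forall s, 0 <= s <= 1 -> forall tt, 0 <= tt <= 1 -> Ccont (ht tt f) (RtoC 0 + RtoC s * (z - RtoC 0))%C).
  { intros s Hs tt Htt. apply ht_cont; auto. pose proof (seg0_in z s Hs). fold r in H. lra. }
  replace (/ z * J (ht t f) (RtoC 0) z - / z * J (ht 1 f) (RtoC 0) z)%C
    with (/ z * J (fun x => ht t f x - ht 1 f x)%C (RtoC 0) z)%C.
  2:{ rewrite J_minus. ring. intros s Hs; apply HC; auto. intros s Hs; apply HC; auto; lra. }
  rewrite Cmod_mult, Cmod_inv by auto. fold r.
  set (K := N * (1 - t) / (v r * ((1 - r) * (1 - r)))).
  assert (HJ : Cmod (J (fun x => ht t f x - ht 1 f x)%C (RtoC 0) z) <= Cmod (z - RtoC 0)%C * K).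
  { apply J_bound.
    - intros s Hs. apply Ccont_minus; apply HC; auto; lra.
    - intros s Hs. pose proof (seg0_in z s Hs) as Hq. fold r in Hq.
      set (q := (RtoC 0 + RtoC s * (z - RtoC 0))%C) in *.
      assert (Hq1 : Cmod q < 1) by lra.
      assert (D1 : (RtoC 1 - RtoC t * q)%C <> RtoC 0).
      { replace (RtoC 1 - RtoC t * q)%C with (RtoC 1 + - RtoC t * q)%C by ring. apply one_minus_t_nz; auto. }
      assert (D2 : (RtoC 1 - RtoC 1 * q)%C <> RtoC 0).
      { replace (RtoC 1 - RtoC 1 * q)%C with (RtoC 1 + - RtoC 1 * q)%C by ring. apply one_minus_t_nz; auto; lra. }
      replace (ht t f q - ht 1 f q)%C with (f q * (RtoC (t - 1) * q) * / (RtoC 1 - RtoC t * q) * / (RtoC 1 - RtoC 1 * q))%C.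
      2:{ unfold ht, Cdiv. rewrite RtoC_minus. field. assert (D2b : (RtoC 1 - q)%C <> RtoC 0) by (replace (RtoC 1 - q)%C with (RtoC 1 - RtoC 1 * q)%C by ring; exact D2). split; [exact D2b | exact D1]. }
      rewrite !Cmod_mult, !Cmod_inv by auto. rewrite Cmod_R.
      pose proof (Cmod_one_minus t q Ht) as L1. pose proof (Cmod_one_minus 1 q ltac:(lra)) as L2.
      assert (Hfq : Cmod (f q) <= N / v r).
      { assert (Hvq : v r <= v (Cmod q)) by (apply weight_mono; auto; apply Cmod_ge_0).
        specialize (HN q Hq1). apply Rmult_le_reg_r with (v r); auto.
        replace (N / v r * v r) with N by (field; lra).
        pose proof (Cmod_ge_0 (f q)). nra. }
      assert (I1 : / Cmod (RtoC 1 - RtoC t * q)%C <= / (1 - r)) by (apply Rinv_le_contravar; lra).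
      assert (I2 : / Cmod (RtoC 1 - RtoC 1 * q)%C <= / (1 - r)) by (apply Rinv_le_contravar; lra).
      assert (P1 : 0 <= / Cmod (RtoC 1 - RtoC t * q)%C) by (left; apply Rinv_0_lt_compat; lra).
      assert (P2 : 0 <= / Cmod (RtoC 1 - RtoC 1 * q)%C) by (left; apply Rinv_0_lt_compat; lra).
      rewrite Rabs_minus_sym, Rabs_pos_eq by lra.
      pose proof (Cmod_ge_0 (f q)). pose proof (Cmod_ge_0 q).
      apply Rle_trans with (N / v r * ((1 - t) * 1) * / (1 - r) * / (1 - r)).
      { assert (X0 : (1 - t) * Cmod q <= (1 - t) * 1) by (apply Rmult_le_compat_l; lra).
        assert (X1 : Cmod (f q) * ((1 - t) * Cmod q) <= N / v r * ((1 - t) * 1)).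
        { apply Rmult_le_compat; auto. apply Rmult_le_pos; lra. }
        assert (X1p : 0 <= Cmod (f q) * ((1 - t) * Cmod q)) by (apply Rmult_le_pos; auto; apply Rmult_le_pos; lra).
        assert (X2 : Cmod (f q) * ((1 - t) * Cmod q) * / Cmod (RtoC 1 - RtoC t * q)%C <= N / v r * ((1 - t) * 1) * / (1 - r)).
        { apply Rmult_le_compat; auto. }
        assert (X2p : 0 <= Cmod (f q) * ((1 - t) * Cmod q) * / Cmod (RtoC 1 - RtoC t * q)%C) by (apply Rmult_le_pos; auto).
        apply Rmult_le_compat; auto. }
      right. unfold K. field. lra. }
  replace (z - RtoC 0)%C with z in HJ by ring. fold r in HJ.
  apply Rle_trans with (/ r * (r * K)).
  { apply Rmult_le_compat_l; auto. left. apply Rinv_0_lt_compat; auto. }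
  right. field. lra.
Qed.

Lemma Rbar_le_lt_p (x : Rbar) (B : R) : Rbar_le x B -> Rbar_lt x p_infty.
Proof. destruct x; simpl; auto. Qed.

Lemma Rbar_le_fin_trans (a : R) (x : Rbar) (M : R) : Rbar_le a x -> Rbar_le x M -> a <= M.
Proof. destruct x; simpl; intros; try contradiction; try lra. Qed.

Lemma C1_bound v (M : R) : is_weight v ->
  (forall t, 0 <= t < 1 -> Rbar_le (opnorm v (cesaro t)) M) ->
  forall h (N : R), holomorphic_on_disc h -> (forall z, in_disc z -> Cmod (h z) * v (Cmod z) <= N) ->
  forall z, in_disc z -> Cmod (cesaro 1 h z) * v (Cmod z) <= Rabs M * N.
Proof.
  intros Hv HM h N Hh HN z Hz.
  pose proof Hz as Hz'. unfold in_disc in Hz'.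
  set (r := Cmod z) in *.
  assert (Hr0 : 0 <= r) by apply Cmod_ge_0.
  assert (Hvr : 0 < v r) by (apply weight_pos; auto).
  assert (HN0 : 0 <= N).
  { specialize (HN (RtoC 0) disc0). rewrite Cmod_0 in HN. pose proof (weight_pos v 0 Hv ltac:(lra)).
    pose proof (Cmod_ge_0 (h (RtoC 0))). nra. }
  pose proof (Rabs_pos M) as HMp.
  apply le_epsilon. intros e He.
  set (eta := e / (Rabs M + 1)).
  assert (Heta : 0 < eta) by (apply Rdiv_lt_0_compat; lra).
  set (c := / (N + eta)).
  assert (Hc : 0 < c) by (apply Rinv_0_lt_compat; lra).
  set (f' := fun x => (RtoC c * h x)%C).
  assert (Hf'h : holomorphic_on_disc f') by (apply holo_scal; auto).
  assert (Hf'b : forall q, in_disc q -> Cmod (f' q) * v (Cmod q) <= 1).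
  { intros q Hq. unfold f'. rewrite Cmod_mult, Cmod_R, Rabs_pos_eq by lra.
    specialize (HN q Hq). rewrite Rmult_assoc.
    apply Rle_trans with (c * N). apply Rmult_le_compat_l; lra.
    unfold c. apply Rmult_le_reg_l with (N + eta). lra. rewrite <- Rmult_assoc, Rinv_r by lra. lra. }
  assert (Hw1 : Rbar_le (wnorm v f') 1) by (apply wnorm_le; auto).
  assert (HHv : in_Hv v f') by (split; auto; eapply Rbar_le_lt_p; exact Hw1).
  set (t := 1 - (1 - r) * (1 - r) * (eta / (N + 1 + eta))).
  assert (Hq : 0 < eta / (N + 1 + eta) < 1).
  { split. apply Rdiv_lt_0_compat; lra. apply Rmult_lt_reg_r with (N + 1 + eta). lra.
    unfold Rdiv. rewrite Rmult_assoc, Rinv_l by lra. lra. }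
  assert (Hr2 : 0 < (1 - r) * (1 - r) <= 1) by (split; nra).
  assert (Ht : 0 <= t < 1) by (unfold t; split; nra).
  assert (Hop := opnorm_ge v (cesaro t) f' z HHv Hw1 Hz).
  pose proof (Rbar_le_fin_trans _ _ _ Hop (HM t Ht)) as HCt.
  unfold f' in HCt. rewrite (cesaro_scal t c h z ltac:(lra) Hh Hz) in HCt.
  rewrite Cmod_mult, Cmod_R, Rabs_pos_eq in HCt by lra. fold r in HCt.
  assert (HCt' : Cmod (cesaro t h z) * v r <= Rabs M * (N + eta)).
  { apply Rmult_le_reg_l with c; auto.
    apply Rle_trans with M. lra.
    unfold c. rewrite <- Rmult_assoc, (Rmult_comm _ (Rabs M)), Rmult_assoc, Rinv_l by lra.
    pose proof (Rle_abs M). lra. }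
  pose proof (cesaro_diff_est v h N t z Hv Hh ltac:(lra) HN Hz) as HD. fold r in HD.
  assert (HD' : Cmod (cesaro t h z - cesaro 1 h z)%C * v r <= eta).
  { apply Rmult_le_compat_r with (r := v r) in HD; [|lra].
    eapply Rle_trans. exact HD.
    replace (N * (1 - t) / (v r * ((1 - r) * (1 - r))) * v r) with (N * (eta / (N + 1 + eta))).
    2:{ unfold t. field. split; lra. }
    apply Rmult_le_reg_r with (N + 1 + eta). lra.
    replace (N * (eta / (N + 1 + eta)) * (N + 1 + eta)) with (N * eta) by (field; lra). nra. }
  pose proof (Cmod_diff_le (cesaro 1 h z) (cesaro t h z)) as T.
  rewrite Cmod_minus_sym in T.
  apply Rle_trans with (Cmod (cesaro t h z) * v r + Cmod (cesaro t h z - cesaro 1 h z)%C * v r).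
  { rewrite <- Rmult_plus_distr_r. apply Rmult_le_compat_r; lra. }
  replace e with ((Rabs M + 1) * eta) by (unfold eta; field; lra).
  lra.
Qed.

Theorem proposition2p11 (v : R -> R) :
  is_weight v ->
  (exists M : R, forall t : R, 0 <= t < 1 -> Rbar_le (opnorm v (cesaro t)) M) ->
  (forall f, in_Hv v f -> in_Hv v (cesaro 1 f)) /\
  (forall f, in_Hv v f -> forall eps : R, 0 < eps -> exists delta : R, 0 < delta /\
     forall g, in_Hv v g -> Rbar_lt (wnorm v (fsub g f)) delta ->
       Rbar_lt (wnorm v (fsub (cesaro 1 g) (cesaro 1 f))) eps).
Proof.
  intros Hv [M HM]. split.
  - intros f [Hfh Hfn]. destruct (wnorm_finite v f Hfn) as [N [_ HN]].
    split. apply cesaro1_holo; auto.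
    apply (Rbar_le_lt_p _ (Rabs M * N)). apply wnorm_le. intros z Hz.
    apply (C1_bound v M Hv HM f N Hfh HN z Hz).
  - intros f [Hfh Hfn] eps Heps.
    pose proof (Rabs_pos M) as HMp.
    exists (eps / (Rabs M + 1)). split. apply Rdiv_lt_0_compat; lra.
    intros g [Hgh Hgn] Hlt.
    assert (Hhh : holomorphic_on_disc (fsub g f)) by (apply holo_minus; auto).
    destruct (wnorm_finite v (fsub g f) (Rbar_lt_trans _ (Finite (eps / (Rabs M + 1))) p_infty Hlt I)) as [Nh [ENh HNh]].
    rewrite ENh in Hlt. simpl in Hlt.
    assert (HN0 : 0 <= Nh).
    { specialize (HNh (RtoC 0) disc0). rewrite Cmod_0 in HNh. pose proof (weight_pos v 0 Hv ltac:(lra)).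
      pose proof (Cmod_ge_0 (fsub g f (RtoC 0))). nra. }
    assert (Hle : Rbar_le (wnorm v (fsub (cesaro 1 g) (cesaro 1 f))) (Rabs M * Nh)).
    { apply wnorm_le. intros z Hz. unfold fsub at 1. rewrite <- (cesaro_minus f g z Hfh Hgh Hz).
      apply (C1_bound v M Hv HM (fsub g f) Nh Hhh HNh z Hz). }
    assert (Hlt2 : Rabs M * Nh < eps).
    { apply Rle_lt_trans with (Rabs M * (eps / (Rabs M + 1))).
      apply Rmult_le_compat_l; lra.
      apply Rmult_lt_reg_r with (Rabs M + 1). lra.
      replace (Rabs M * (eps / (Rabs M + 1)) * (Rabs M + 1)) with (Rabs M * eps) by (field; lra). nra. }
    destruct (wnorm v (fsub (cesaro 1 g) (cesaro 1 f))); simpl in *; auto; lra.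
Qed.
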